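(* In the FIND setting of the context, let $\mathcal C_r$ and $\mathcal C_s$ be leaf clusters of $\mathcal T$, choose consistent orderings of $\mathcal T_r^+$ and $\mathcal T_s^+$, and let $\boldsymbol\Sigma_{r,g+}$, $\boldsymbol\Sigma_{s,g+}$ denote the matrices produced by the elimination process for target $r$ and target $s$. Then for every cluster $\mathcal C_i$ that is a node of both $\mathcal T_r^+$ and $\mathcal T_s^+$, $$\boldsymbol\Sigma_{r,i+}(\mathcal B_i,\mathcal B_i)=\boldsymbol\Sigma_{s,i+}(\mathcal B_i,\mathcal B_i).$$
   Context: Setting (FIND). $\mathcal M$ is a finite set of mesh nodes; $\mathbf A$ is an invertible complex matrix indexed by $\mathcal M\times\mathcal M$, structurally symmetric ($A_{ij}\neq0\iff A_{ji}\neq0$); distinct nodes $i,j$ are connected if $A_{ij}\neq 0$. $\boldsymbol\Sigma$ is a complex matrix indexed by $\mathcal M\times\mathcal M$ with $\Sigma_{ij}=0$ whenever $i\neq j$ and $i,j$ are not connected. Matrices are indexed by $\mathcal M$ itself (the ordering only determines the sequence of eliminations). $\dagger$ is conjugate transpose, $\mathbf X^{-\dagger}=(\mathbf X^{-1})^\dagger$. $\mathbf X(X,Y)$ is the submatrix with rows in $X$, columns in $Y$. For a cluster $\mathcal C\subseteq\mathcal M$: boundary set $\mathcal B_{\mathcal C}=\{i\in\mathcal C: A_{ij}\neq 0\text{ for some } j\notin\mathcal C\}$, inner set $\mathcal I_{\mathcal C}=\mathcal C\setminus\mathcal B_{\mathcal C}$; for $\mathcal C_g$ write $\mathcal B_g,\mathcal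 I_g$. Cluster tree: $\mathcal T$ is a rooted binary tree of clusters with root $\mathcal M$, each non-leaf cluster the disjoint union of its two children. For a leaf $\mathcal C_r$ with path $r=a_0,\dots,a_d$ (root) and $b_k$ the sibling of $a_k$, the augmented tree $\mathcal T_r^+$ has root $\mathcal C_{-r}=\mathcal M\setminus\mathcal C_r$; for $0\le k\le d-2$, $\mathcal C_{-a_k}=\mathcal M\setminus\mathcal C_{a_k}$ has children $\mathcal C_{b_k}$ and $\mathcal C_{-a_{k+1}}$, with $\mathcal C_{-a_{d-1}}$ identified with $\mathcal C_{b_{d-1}}$; each basic cluster $\mathcal C_{b_k}$ carries its subtree from $\mathcal T$. (A cluster common to two augmented trees has the same subtree in both.) Private inner nodes: $\mathcal S_g=\mathcal I_g$ for a leaf $g$ of an augmented tree; $\mathcal S_g=\mathcal I_g\setminus(\mathcal I_i\cup\mathcal I_j)$ if $g$ has children $i,j$. Consistent ordering: a total order $g_1,\dots,g_m$ of the nodes of $\mathcal T_r^+$ with every node after all its descendants. Elimination for target $r$: $\mathbf A_{r,g_1}=\mathbf A$, $\boldsymbol\Sigma_{r,g_1}=\boldsymbol\Sigma$; for each $g$ (with $\mathbf A_{r,g}(\mathcal S_g,\mathcal S_g)$ invertible), $\mathcal L_g=\mathbf A_{r,g}(\mathcal B_g,\mathcal S_g)\mathbf A_{r,g}(\mathcal S_g,\mathcal S_g)^{-1}$, $\mathbf L_g$ is the identity on $\mathcal M$ except $\mathbf L_g(\mathcal B_g,\mathcal S_g)=\mathcal L_g$, $\mathbf A_{r,g+}=\mathbf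 L_g^{-1}\mathbf A_{r,g}$, $\boldsymbol\Sigma_{r,g+}=\mathbf L_g^{-1}\boldsymbol\Sigma_{r,g}\mathbf L_g^{-\dagger}$, and $\mathbf A_{r,g_{t+1}}=\mathbf A_{r,g_t+}$, $\boldsymbol\Sigma_{r,g_{t+1}}=\boldsymbol\Sigma_{r,g_t+}$. Thus $\boldsymbol\Sigma_{r,i+}$ is the matrix just after eliminating $\mathcal S_i$. *)

(* Defs.v *)
From HB Require Import structures.
From mathcomp Require Import all_boot all_order all_algebra.
Set Implicit Arguments. Unset Strict Implicit. Unset Printing Implicit Defensive.
Import Order.TTheory GRing.Theory Num.Theory.
Local Open Scope ring_scope.

Section FIND.
Variable C : numClosedFieldType.
Variable n : nat.
Notation node := 'I_n.
Notation mx := 'M[C]_n.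

Definition ctmx (M : mx) : mx := (map_mx Num.conj M)^T.

Definition selmx (X : {set node}) : 'M[C]_(#|X|, n) :=
  \matrix_(a < #|X|, j < n) (enum_val a == j)%:R.

Definition subm (X Y : {set node}) (M : mx) : 'M[C]_(#|X|, #|Y|) :=
  selmx X *m M *m (selmx Y)^T.

Definition struct_sym (A : mx) := forall i j, (A i j != 0) = (A j i != 0).
Definition connected (A : mx) (i j : node) := (i != j) && (A i j != 0).
Definition sigma_pattern (A Sig : mx) :=
  forall i j, i != j -> ~~ connected A i j -> Sig i j = 0.

Definition bnd (A : mx) (X : {set node}) : {set node} :=
  [set i in X | [exists j, (j \notin X) && (A i j != 0)]].
Definition inner (A : mx) (X : {set node}) : {set node} := X :\: bnd A X.

Inductive ctree := CLeaf of {set node} | CNode of {set node} & ctree & ctree.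

Definition croot (t : ctree) := match t with CLeaf X => X | CNode X _ _ => X end.

Fixpoint ctree_wf (t : ctree) : bool :=
  match t with
  | CLeaf _ => true
  | CNode X l r => [&& X == croot l :|: croot r, [disjoint croot l & croot r],
                       ctree_wf l & ctree_wf r]
  end.

Definition cluster_tree (T : ctree) := (croot T == setT) && ctree_wf T.

(* positions in T: sequences of directions from the root (false = left) *)
Fixpoint csub (t : ctree) (p : seq bool) : option ctree :=
  match p with
  | [::] => Some t
  | b :: p' => match t with
               | CLeaf _ => None
               | CNode _ l r => csub (if b then r else l) p'
               end
  end.

Definition is_leaf_pos (T : ctree) (p : seq bool) :=
  if csub T p is Some (CLeaf _) then true else false.

Definition parent (q : seq bool) := take (size q).-1 q.
Definition sibling (q : seq bool) := rcons (parent q) (~~ last false q).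

(* node labels of augmented trees: (false, p) = basic cluster at position p
   of T; (true, p) = complement cluster M \ C_p *)
Definition lab := (bool * seq bool)%type.

Definition clus (T : ctree) (g : lab) : {set node} :=
  let X := if csub T g.2 is Some t then croot t else set0 in
  if g.1 then ~: X else X.

Inductive atree := ALeaf of lab | ANode of lab & atree & atree.

Definition aroot (t : atree) := match t with ALeaf g => g | ANode g _ _ => g end.

Fixpoint conv (p : seq bool) (t : ctree) : atree :=
  match t with
  | CLeaf _ => ALeaf (false, p)
  | CNode _ l r => ANode (false, p) (conv (rcons p false) l) (conv (rcons p true) r)
  end.

Definition basic_at (T : ctree) (p : seq bool) : atree :=
  if csub T p is Some t then conv p t else ALeaf (false, p).

(* augk T p k is the augmented subtree rooted at C_{-a}, a = take k p
   (for k >= 2); for k = 1 it is the subtree of the sibling b_{d-1}. *)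
Fixpoint augk (T : ctree) (p : seq bool) (k : nat) : atree :=
  match k with
  | 0 => ALeaf (true, [::])
  | 1 => basic_at T (sibling (take 1 p))
  | k'.+1 => ANode (true, take k p) (basic_at T (sibling (take k p))) (augk T p k')
  end.

(* augmented tree T_r^+ for the leaf at position p *)
Definition aug (T : ctree) (p : seq bool) : atree := augk T p (size p).

Fixpoint alabels (t : atree) : seq lab :=
  match t with ALeaf g => [:: g] | ANode g l r => g :: alabels l ++ alabels r end.

Fixpoint asub (t : atree) (g : lab) : option atree :=
  match t with
  | ALeaf h => if h == g then Some t else None
  | ANode h l r => if h == g then Some t else
                   if asub l g is Some u then Some u else asub r g
  end.

Definition descendants (t : atree) (g : lab) : seq lab :=
  if asub t g is Some u then behead (alabels u) else [::].

Definition consistent (t : atree) (o : seq lab) :=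
  [&& uniq o, perm_eq o (alabels t) &
      all (fun g : lab => all (fun h => (index h o < index g o)%N) (descendants t g)) o].

Definition priv (A : mx) (T : ctree) (t : atree) (g : lab) : {set node} :=
  if asub t g is Some (ANode _ l r) then
    inner A (clus T g) :\: (inner A (clus T (aroot l)) :|: inner A (clus T (aroot r)))
  else inner A (clus T g).

(* one elimination step at node g; state = (A_{r,g}, Sigma_{r,g}) *)
Definition elimL (A : mx) (T : ctree) (t : atree) (g : lab) (Ac : mx) : mx :=
  let B := bnd A (clus T g) in
  let S := priv A T t g in
  let cL := subm B S Ac *m invmx (subm S S Ac) in
  let E := (selmx B)^T *m cL *m selmx S in
  \matrix_(i, j) if (i \in B) && (j \in S) then E i j else (i == j)%:R.

Definition step (A : mx) (T : ctree) (t : atree) (st : mx * mx) (g : lab) : mx * mx :=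
  let Li := invmx (elimL A T t g st.1) in
  (Li *m st.1, Li *m st.2 *m ctmx Li).

(* state just before eliminating g, and Sigma_{r,g+} (just after) *)
Definition state_before (A Sig : mx) T t (o : seq lab) (g : lab) :=
  foldl (step A T t) (A, Sig) (take (index g o) o).
Definition Sigma_plus (A Sig : mx) T t (o : seq lab) (g : lab) : mx :=
  (foldl (step A T t) (A, Sig) (take (index g o).+1 o)).2.

Definition elim_ok (A Sig : mx) T t (o : seq lab) :=
  forall g, g \in o ->
    subm (priv A T t g) (priv A T t g) (state_before A Sig T t o g).1 \in unitmx.

End FIND.

(* Main.v *)
Require Import Defs.
From HB Require Import structures.
From mathcomp Require Import all_boot all_order all_algebra.
Import Order.TTheory GRing.Theory Num.Theory.
Local Open Scope ring_scope.
Set Implicit Arguments. Unset Strict Implicit. Unset Printing Implicit Defensive.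

Lemma asub_root t g u : asub t g = Some u -> aroot u = g.
Proof.
elim: t u => [h|h l IHl r IHr] u /=.
  by case: eqP => // -> [<-].
case: eqP => [-> [<-] //|_].
case E: (asub l g) => [v|]; [by move=> [<-]; apply: (IHl _ E) | exact: IHr].
Qed.

Lemma asub_sub t g u : asub t g = Some u -> {subset alabels u <= alabels t}.
Proof.
elim: t u => [h|h l IHl r IHr] u /=.
  by case: eqP => // -> [<-].
case: eqP => [-> [<-] //|_].
case E: (asub l g) => [v|].
  move=> [<-] x /(IHl _ E) xl; by rewrite inE mem_cat xl orbT.
move=> /IHr H x /H xr; by rewrite inE mem_cat xr !orbT.
Qed.

Lemma asub_mem t g u : asub t g = Some u -> g \in alabels t.
Proof.
move=> H; apply: (asub_sub H).
case: u H => [k|k l r] H; rewrite -(asub_root H) /=; by rewrite inE eqxx.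
Qed.

Lemma asub_None t g : g \notin alabels t -> asub t g = None.
Proof. by case E: (asub t g) => [u|] //; rewrite (asub_mem E). Qed.

Lemma asub_Some t g : g \in alabels t -> exists u, asub t g = Some u.
Proof.
elim: t => [h|h l IHl r IHr] /=.
  rewrite inE => /eqP ->; rewrite eqxx; by eauto.
case: eqP => [_|ne]; first by eauto.
rewrite inE mem_cat => /orP [/eqP E|/orP [gl|gr]]; first by case: ne.
  by case: (IHl gl) => v ->; eauto.
case E: (asub l g) => [v|]; by eauto.
Qed.

Lemma asub_node_l k l r g : k != g -> g \in alabels l ->
  asub (ANode k l r) g = asub l g.
Proof.
move=> /negbTE kg gl /=; rewrite kg; by case: (asub_Some gl) => v ->.
Qed.

Lemma asub_node_r k l r g : k != g -> g \notin alabels l ->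
  asub (ANode k l r) g = asub r g.
Proof. by move=> /negbTE kg gl /=; rewrite kg (asub_None gl). Qed.

Lemma uniq_node k l r : uniq (alabels (ANode k l r)) ->
  [/\ k \notin alabels l, k \notin alabels r, uniq (alabels l), uniq (alabels r)
    & forall x, x \in alabels l -> x \notin alabels r].
Proof.
rewrite /= cat_uniq mem_cat negb_or => /andP [/andP [kl kr] /and3P [ul hl ur]].
split => // x xl; apply/negP => xr; move/hasPn: hl => /(_ x xr).
by rewrite xl.
Qed.

Lemma asub_uniq t g u : uniq (alabels t) -> asub t g = Some u -> uniq (alabels u).
Proof.
elim: t u => [h|h l IHl r IHr] u /=.
  by case: eqP => // -> _ [<-].
move=> U; case: eqP => [_ [<-] //|_].
have [_ _ ul ur _] := uniq_node U.
case E: (asub l g) => [v|]; [by move=> [<-]; apply: (IHl _ ul E) | exact: IHr ur].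
Qed.

Lemma asub_trans t g u h : uniq (alabels t) -> asub t g = Some u ->
  h \in alabels u -> asub t h = asub u h.
Proof.
elim: t g u h => [k|k l IHl r IHr] g u h U.
  by rewrite /=; case: eqP => // -> [<-].
have [kl kr ul ur dis] := uniq_node U.
rewrite {1}/asub -/asub; case: eqP => [-> [<-] //|kg].
case E: (asub l g) => [v|].
  move=> [<-] hv.
  have hl : h \in alabels l := asub_sub E hv.
  rewrite asub_node_l //; last by apply/eqP => e; rewrite e hl in kl.
  exact: IHl E hv.
move=> E' hv.
have hr : h \in alabels r := asub_sub E' hv.
rewrite asub_node_r //; last first.
  by apply/negP => hl; move: (dis _ hl); rewrite hr.
  by apply/eqP => e; rewrite e hr in kr.
exact: IHr E' hv.
Qed.

Lemma desc_trans t g u h : uniq (alabels t) -> asub t g = Some u ->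
  h \in alabels u -> descendants t h = descendants u h.
Proof. by move=> U E hu; rewrite /descendants (asub_trans U E hu). Qed.

Fixpoint awf (K : finType) (cl : lab -> {set K}) (t : atree) : bool :=
  match t with
  | ALeaf _ => true
  | ANode g l r => [&& cl g == cl (aroot l) :|: cl (aroot r),
                      [disjoint cl (aroot l) & cl (aroot r)], awf cl l & awf cl r]
  end.

Lemma awf_root K (cl : lab -> {set K}) t g : awf cl t -> g \in alabels t ->
  cl g \subset cl (aroot t).
Proof.
elim: t => [h|h l IHl r IHr] /=.
  by move=> _; rewrite inE => /eqP ->.
move=> /and4P [/eqP E _ wl wr]; rewrite inE mem_cat => /orP [/eqP ->//|/orP [gl|gr]].
  rewrite E; apply: subset_trans (IHl wl gl) _; exact: subsetUl.
rewrite E; apply: subset_trans (IHr wr gr) _; exact: subsetUr.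
Qed.

Lemma awf_sub K (cl : lab -> {set K}) t g u : awf cl t -> asub t g = Some u -> awf cl u.
Proof.
elim: t u => [h|h l IHl r IHr] u /=.
  by case: eqP => // _ _ [<-].
move=> W; move: (W) => /and4P [_ _ wl wr].
case: eqP => [_ [<-] //|_].
case E: (asub l g) => [v|]; [by move=> [<-]; apply: (IHl _ wl E) | exact: IHr wr].
Qed.

Lemma desc_labels t g h : h \in descendants t g ->
  exists2 u, asub t g = Some u & h \in alabels u.
Proof.
rewrite /descendants; case E: (asub t g) => [u|] //= hu.
exists u => //; exact: mem_behead.
Qed.

Lemma awf_desc K (cl : lab -> {set K}) t g h : awf cl t -> h \in descendants t g ->
  cl h \subset cl g.
Proof.
move=> W /desc_labels [u E hu].
by rewrite -(asub_root E); apply: awf_root hu; apply: awf_sub E.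
Qed.

Lemma desc_node_root k l r : descendants (ANode k l r) k = alabels l ++ alabels r.
Proof. by rewrite /descendants /= eqxx. Qed.

Lemma awf_disj K (cl : lab -> {set K}) t g h : awf cl t -> uniq (alabels t) ->
  g \in alabels t -> h \in alabels t -> g != h ->
  h \notin descendants t g -> g \notin descendants t h -> [disjoint cl g & cl h].
Proof.
elim: t g h => [k|k l IHl r IHr] g h.
  by move=> _ _; rewrite !inE => /eqP -> /eqP ->; rewrite eqxx.
move=> W U; move: (W) => /and4P [/eqP E D wl wr].
have [kl kr ul ur dis] := uniq_node U.
rewrite !inE !mem_cat.
move=> /orP [/eqP gk|/orP [gl|gr]].
  subst g; move=> /orP [/eqP -> |hlr]; first by rewrite eqxx.
  by rewrite desc_node_root mem_cat hlr.
move=> /orP [/eqP hk|/orP [hl|hr]].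
    subst h => _ _; by rewrite desc_node_root mem_cat gl.
  have kg : k != g by apply/eqP => e; rewrite e gl in kl.
  have kh : k != h by apply/eqP => e; rewrite e hl in kl.
  rewrite /descendants !asub_node_l // -!/(descendants _ _).
  exact: IHl.
  have kg : k != g by apply/eqP => e; rewrite e gl in kl.
  move=> _ _ _.
  apply: disjointWl (awf_root wl gl) _; apply: disjointWr (awf_root wr hr) _.
  exact: D.
move: gr => gr.
have kg : k != g by apply/eqP => e; rewrite e gr in kr.
have ngl : g \notin alabels l by apply/negP => gl; move: (dis _ gl); rewrite gr.
move=> /orP [/eqP hk|/orP [hl|hr]].
    subst h => _ _; by rewrite desc_node_root mem_cat gr orbT.
  move=> _ _ _; rewrite disjoint_sym.
  apply: disjointWl (awf_root wl hl) _; apply: disjointWr (awf_root wr gr) _.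
  exact: D.
have kh : k != h by apply/eqP => e; rewrite e hr in kr.
have nhl : h \notin alabels l by apply/negP => hl; move: (dis _ hl); rewrite hr.
rewrite /descendants !asub_node_r // -!/(descendants _ _).
exact: IHr.
Qed.

Lemma csub_nil n (T : ctree n) : csub T [::] = Some T.
Proof. by case: T. Qed.

Lemma csub_cons n (T : ctree n) b p : csub T (b :: p) =
  match T with CLeaf _ => None | CNode _ l r => csub (if b then r else l) p end.
Proof. by case: T. Qed.

Lemma csub_cat n (T : ctree n) p q :
  csub T (p ++ q) = if csub T p is Some t then csub t q else None.
Proof.
elim: p T => [|b p IH] T; first by rewrite csub_nil.
by rewrite cat_cons !csub_cons; case: T => [X|X l r] //; rewrite IH.
Qed.

Lemma csub_rcons n (T : ctree n) p b :
  csub T (rcons p b) =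
  if csub T p is Some (CNode _ l r) then Some (if b then r else l) else None.
Proof.
rewrite -cats1 csub_cat; case: (csub T p) => [[X|X l r]|] //=.
by case: b; rewrite csub_nil.
Qed.

Lemma conv_root n (t : ctree n) p : aroot (conv p t) = (false, p).
Proof. by case: t. Qed.

Lemma basic_root n (T : ctree n) p : aroot (basic_at T p) = (false, p).
Proof. by rewrite /basic_at; case: (csub T p) => [t|] //; rewrite conv_root. Qed.

Definition canon n (T : ctree n) (g : lab) : atree :=
  if g.1 then augk T g.2 (size g.2) else basic_at T g.2.

Lemma asub_conv n (T : ctree n) t p g u : csub T p = Some t ->
  asub (conv p t) g = Some u -> u = canon T g.
Proof.
elim: t p u => [X|X l IHl r IHr] p u E /=.
  case: eqP => // <- [<-]; by rewrite /canon /= /basic_at E.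
case: eqP => [<- [<-]|_]; first by rewrite /canon /= /basic_at E.
have El : csub T (rcons p false) = Some l by rewrite csub_rcons E.
have Er : csub T (rcons p true) = Some r by rewrite csub_rcons E.
case E1: (asub (conv (rcons p false) l) g) => [v|].
  by move=> [<-]; apply: IHl El E1.
exact: IHr Er.
Qed.

Lemma asub_basic n (T : ctree n) p g u :
  asub (basic_at T p) g = Some u -> u = canon T g.
Proof.
rewrite /basic_at; case E: (csub T p) => [t|].
  exact: asub_conv E.
by rewrite /=; case: eqP => // <- [<-]; rewrite /canon /= /basic_at E.
Qed.

Lemma augkS n (T : ctree n) p k : augk T p k.+2 =
  ANode (true, take k.+2 p) (basic_at T (sibling (take k.+2 p))) (augk T p k.+1).
Proof. by []. Qed.

Lemma asub_node h l r g : asub (ANode h l r) g =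
  if h == g then Some (ANode h l r) else
  if asub l g is Some u then Some u else asub r g.
Proof. by []. Qed.

Lemma augk_take n (T : ctree n) p p' k : take k p = take k p' ->
  augk T p k = augk T p' k.
Proof.
elim: k => [|[|k] IH] E //; first by rewrite /= E.
rewrite !augkS E (IH _) //.
by rewrite -(take_takel p (leqnSn k.+1)) E take_takel.
Qed.

Lemma asub_augk n (T : ctree n) p k g u : (k <= size p)%N ->
  asub (augk T p k) g = Some u -> u = canon T g.
Proof.
elim: k u => [|[|k] IH] u kp.
- by rewrite /=; case: eqP => // <- [<-].
- exact: asub_basic.
rewrite augkS asub_node; case: eqP => [<- [<-]|_].
  rewrite -augkS /canon /= size_takel //; apply: (@augk_take _ T p (take k.+2 p) k.+2).
  by rewrite take_takel.
case E1: (asub (basic_at T (sibling (take k.+2 p))) g) => [v|].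
  by move=> [<-]; apply: asub_basic E1.
by apply: IH; apply: ltnW.
Qed.

Lemma asub_aug n (T : ctree n) p g u :
  asub (aug T p) g = Some u -> u = canon T g.
Proof. exact: asub_augk. Qed.

Lemma ctree_wf_sub n (T : ctree n) p t : ctree_wf T -> csub T p = Some t -> ctree_wf t.
Proof.
elim: p T => [|b p IH] T; first by rewrite csub_nil => W [<-].
rewrite csub_cons; case: T => [X|X l r] //= /and4P [_ _ wl wr].
by case: b; apply: IH.
Qed.

Lemma awf_conv n (T : ctree n) p t : ctree_wf T -> csub T p = Some t ->
  awf (clus T) (conv p t).
Proof.
move=> W; elim: t p => [X|X l IHl r IHr] p E //=.
have El : csub T (rcons p false) = Some l by rewrite csub_rcons E.
have Er : csub T (rcons p true) = Some r by rewrite csub_rcons E.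
rewrite !conv_root /clus /= E El Er (IHl _ El) (IHr _ Er) !andbT.
by move: (ctree_wf_sub W E) => /= /and4P [-> -> _ _].
Qed.

Lemma awf_basic n (T : ctree n) p : ctree_wf T -> awf (clus T) (basic_at T p).
Proof.
move=> W; rewrite /basic_at; case E: (csub T p) => [t|] //.
exact: awf_conv E.
Qed.

Lemma setC_split (K : finType) (A B U : {set K}) :
  U = A :|: B -> [disjoint A & B] -> ~: A = B :|: ~: U.
Proof.
move=> -> D; apply/setP => x; rewrite !inE negb_or.
case xA: (x \in A) => /=.
  by rewrite (disjointFr D xA).
by case: (x \in B).
Qed.

Lemma csub_split n (T : ctree n) P X l r b : ctree_wf T ->
  csub T P = Some (CNode X l r) ->
  clus T (false, P) = clus T (false, rcons P b) :|: clus T (false, rcons P (~~ b))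
  /\ [disjoint clus T (false, rcons P b) & clus T (false, rcons P (~~ b))].
Proof.
move=> W E; rewrite /clus /= !csub_rcons E.
move: (ctree_wf_sub W E) => /= /and4P [/eqP -> D _ _].
by case: b => /=; rewrite ?(setUC (croot r)) ?(disjoint_sym (croot r)).
Qed.

Lemma prefix_node n (T : ctree n) p Y k : (k < size p)%N ->
  csub T p = Some (CLeaf Y) -> exists X l r, csub T (take k p) = Some (CNode X l r).
Proof.
move=> kp; rewrite -[in csub T p](cat_take_drop k p) csub_cat.
case E: (drop k p) => [|b q].
  by move: (congr1 size E); rewrite size_drop /=; move/eqP; rewrite subn_eq0 leqNgt kp.
case: (csub T (take k p)) => [[X|X l r]|] //= _; by eauto.
Qed.

Lemma sibling_rcons (P : seq bool) b : sibling (rcons P b) = rcons P (~~ b).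
Proof.
rewrite /sibling /parent size_rcons /= last_rcons.
by rewrite -[in take _ (rcons P b)]cats1 take_size_cat.
Qed.

Lemma clus_augk_root n (T : ctree n) p Y k : ctree_wf T -> croot T = setT ->
  csub T p = Some (CLeaf Y) -> (0 < k <= size p)%N ->
  clus T (aroot (augk T p k)) = ~: clus T (false, take k p).
Proof.
move=> W R E /andP []; case: k => [|[|k]] // _ kp.
rewrite /= basic_root.
have [X [l [r E0]]] := prefix_node (k:=0) kp E.
rewrite take0 in E0.
rewrite (take_nth false kp) take0 sibling_rcons.
have [S D] := csub_split (nth false p 0) W E0.
rewrite (setC_split S D).
by rewrite /clus /= csub_nil R setCT setU0.
Qed.

Lemma awf_node (K : finType) (cl : lab -> {set K}) g l r :
  awf cl (ANode g l r) = [&& cl g == cl (aroot l) :|: cl (aroot r),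
                      [disjoint cl (aroot l) & cl (aroot r)], awf cl l & awf cl r].
Proof. by []. Qed.

Lemma awf_augk n (T : ctree n) p Y k : ctree_wf T -> croot T = setT ->
  csub T p = Some (CLeaf Y) -> (k <= size p)%N -> awf (clus T) (augk T p k).
Proof.
move=> W R E; elim: k => [|[|k] IH] kp //.
  exact: awf_basic.
rewrite augkS awf_node basic_root awf_basic // IH ?(ltnW kp) // andbT.
rewrite (clus_augk_root W R E) ?(ltnW kp) //.
have kp' : (k.+1 < size p)%N := kp.
have [X [l [r E0]]] := prefix_node kp' E.
rewrite (take_nth false kp') sibling_rcons.
have [S D] := csub_split (nth false p k.+1) W E0.
rewrite /clus /= -/(clus T (false, rcons (take k.+1 p) (nth false p k.+1))).
rewrite -/(clus T (false, take k.+1 p)) -/(clus T (false, rcons (take k.+1 p) (~~ nth false p k.+1))).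
rewrite (setC_split S D) eqxx /=.
by rewrite disjoints_subset setCK S subsetUr.
Qed.

Lemma awf_aug n (T : ctree n) p : cluster_tree T -> is_leaf_pos T p ->
  awf (clus T) (aug T p).
Proof.
move=> /andP [/eqP R W]; rewrite /is_leaf_pos.
case E: (csub T p) => [[Y|]|] // _.
exact: awf_augk E _.
Qed.

Lemma selmx_mull (C : numClosedFieldType) n (X : {set 'I_n}) m (N : 'M[C]_(n, m)) a l :
  (@selmx C n X *m N) a l = N (enum_val a) l.
Proof.
rewrite mxE (bigD1 (enum_val a)) //= big1 => [|k ne].
  by rewrite mxE eqxx mul1r addr0.
by rewrite mxE eq_sym (negbTE ne) mul0r.
Qed.

Lemma selmx_mulr (C : numClosedFieldType) n (Y : {set 'I_n}) m (N : 'M[C]_(m, n)) a b :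
  (N *m (@selmx C n Y)^T) a b = N a (enum_val b).
Proof.
rewrite mxE (bigD1 (enum_val b)) //= big1 => [|k ne].
  by rewrite !mxE eqxx mulr1 addr0.
by rewrite !mxE eq_sym (negbTE ne) mulr0.
Qed.

Lemma subm_entry (C : numClosedFieldType) n (X Y : {set 'I_n}) (M : 'M[C]_n) a b :
  subm X Y M a b = M (enum_val a) (enum_val b).
Proof. by rewrite /subm selmx_mulr selmx_mull. Qed.

Lemma subm_ext (C : numClosedFieldType) n (X Y : {set 'I_n}) (M M' : 'M[C]_n) :
  (forall x y, x \in X -> y \in Y -> M x y = M' x y) -> subm X Y M = subm X Y M'.
Proof.
move=> H; apply/matrixP => a b; rewrite !subm_entry; apply: H; exact: enum_valP.
Qed.

Definition supp (C : numClosedFieldType) n (B S : {set 'I_n}) (N : 'M[C]_n) :=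
  forall i j, N i j != 0 -> (i \in B) && (j \in S).

Lemma supp_mul0 (C : numClosedFieldType) n (B S B' S' : {set 'I_n}) (N N' : 'M[C]_n) :
  supp B S N -> supp B' S' N' -> [disjoint S & B'] -> N *m N' = 0.
Proof.
move=> H H' D; apply/matrixP => i j; rewrite !mxE big1 // => k _.
have [/eqP -> | nz] := boolP (N i k == 0); first by rewrite mul0r.
have [/eqP -> | nz'] := boolP (N' k j == 0); first by rewrite mulr0.
move: (H _ _ nz) (H' _ _ nz') => /andP [_ kS] /andP [kB _].
by rewrite (disjointFr D kS) in kB.
Qed.

Lemma inv_unip (C : numClosedFieldType) n (N : 'M[C]_n) :
  N *m N = 0 -> invmx (1%:M + N) = 1%:M - N.
Proof.
move=> NN.
have E : (1%:M + N) *m (1%:M - N) = 1%:M.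
  by rewrite mulmxDl mulmxBr !mul1mx mulmxBr mulmx1 NN subr0 subrK.
have [U _] := mulmx1_unit E.
have := congr1 (mulmx (invmx (1%:M + N))) E.
by rewrite mulmxA mulVmx // mul1mx mulmx1.
Qed.

Lemma supp_row (C : numClosedFieldType) n (B S : {set 'I_n}) (N M : 'M[C]_n) x j :
  supp B S N -> x \notin B -> ((1%:M - N) *m M) x j = M x j.
Proof.
move=> H xB; rewrite mulmxBl mul1mx !mxE big1 ?subr0 // => k _.
have [/eqP -> | nz] := boolP (N x k == 0); first by rewrite mul0r.
by move: (H _ _ nz) => /andP [xB' _]; rewrite xB' in xB.
Qed.

Lemma ctmx_entry (C : numClosedFieldType) n (M : 'M[C]_n) i j :
  ctmx M i j = Num.conj (M j i).
Proof. by rewrite /ctmx !mxE. Qed.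

Lemma ctmx_mul (C : numClosedFieldType) n (M N : 'M[C]_n) :
  ctmx (M *m N) = ctmx N *m ctmx M.
Proof. by rewrite /ctmx map_mxM trmx_mul. Qed.

Lemma supp_sig (C : numClosedFieldType) n (B S : {set 'I_n}) (N M : 'M[C]_n) x y :
  supp B S N -> x \notin B -> y \notin B ->
  ((1%:M - N) *m M *m ctmx (1%:M - N)) x y = M x y.
Proof.
move=> H xB yB.
rewrite !mxE (bigD1 y) //= big1 => [|k ky].
  rewrite ctmx_entry !mxE eqxx.
  have -> : N y y = 0 by case: (eqVneq (N y y) 0) => // nz; move: (H _ _ nz) => /andP [yB' _]; by rewrite yB' in yB.
  rewrite subr0 (_ : true%:R = 1) // conjC1 mulr1 addr0.
  by move: (@supp_row _ _ B S N M x y H xB); rewrite !mxE.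
rewrite ctmx_entry !mxE.
have -> : N y k = 0 by case: (eqVneq (N y k) 0) => // nz; move: (H _ _ nz) => /andP [yB' _]; by rewrite yB' in yB.
by rewrite eq_sym (negbTE ky) subr0 conjC0 mulr0.
Qed.

Lemma priv_sub (C : numClosedFieldType) n (A : 'M[C]_n) T t g :
  priv A T t g \subset inner A (clus T g).
Proof. by rewrite /priv; case: (asub t g) => [[?|? l r]|] //; exact: subsetDl. Qed.

Lemma priv_clus (C : numClosedFieldType) n (A : 'M[C]_n) T t g :
  priv A T t g \subset clus T g.
Proof. apply: subset_trans (priv_sub A T t g) _; exact: subsetDl. Qed.

Lemma bnd_clus (C : numClosedFieldType) n (A : 'M[C]_n) X : bnd A X \subset X.
Proof. by apply/subsetP => x; rewrite inE => /andP []. Qed.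

Lemma priv_bnd (C : numClosedFieldType) n (A : 'M[C]_n) T t g :
  [disjoint priv A T t g & bnd A (clus T g)].
Proof.
rewrite disjoints_subset; apply: subset_trans (priv_sub A T t g) _.
by rewrite /inner setDE subsetIr.
Qed.

Definition Nm (C : numClosedFieldType) n (A : 'M[C]_n) T t g (M : 'M[C]_n) :=
  elimL A T t g M - 1%:M.

Lemma Nm_supp (C : numClosedFieldType) n (A : 'M[C]_n) T t g M :
  supp (bnd A (clus T g)) (priv A T t g) (Nm A T t g M).
Proof.
move=> i j; rewrite /Nm /elimL !mxE.
case: ifP => [Hc _ //|_]; by rewrite subrr eqxx.
Qed.

Lemma Nm_sq (C : numClosedFieldType) n (A : 'M[C]_n) T t g M :
  Nm A T t g M *m Nm A T t g M = 0.
Proof. exact: (supp_mul0 (@Nm_supp _ _ A T t g M) (@Nm_supp _ _ A T t g M) (priv_bnd A T t g)). Qed.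

Lemma step_eq (C : numClosedFieldType) n (A : 'M[C]_n) T t st g :
  step A T t st g =
  ((1%:M - Nm A T t g st.1) *m st.1,
   (1%:M - Nm A T t g st.1) *m st.2 *m ctmx (1%:M - Nm A T t g st.1)).
Proof.
rewrite /step -(inv_unip (Nm_sq A T t g st.1)).
by rewrite /Nm addrC subrK.
Qed.

Lemma elimL_ext (C : numClosedFieldType) n (A : 'M[C]_n) T t g (M M' : 'M[C]_n) :
  (forall x j, x \in bnd A (clus T g) :|: priv A T t g -> M x j = M' x j) ->
  elimL A T t g M = elimL A T t g M'.
Proof.
move=> H; rewrite /elimL.
rewrite (@subm_ext _ _ _ _ M M'); last by move=> x y xB _; apply: H; rewrite inE xB.
rewrite (@subm_ext _ _ _ _ M M') //; move=> x y xS _; apply: H; by rewrite inE xS orbT.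
Qed.

Lemma step_comm (C : numClosedFieldType) n (A : 'M[C]_n) T t st g h :
  [disjoint bnd A (clus T g) :|: priv A T t g & bnd A (clus T h) :|: priv A T t h] ->
  step A T t (step A T t st g) h = step A T t (step A T t st h) g.
Proof.
move=> D.
set Bg := bnd A (clus T g); set Sg := priv A T t g.
set Bh := bnd A (clus T h); set Sh := priv A T t h.
rewrite !step_eq /=.
set Ng := Nm A T t g st.1; set Nh := Nm A T t h st.1.
have Eh : Nm A T t h ((1%:M - Ng) *m st.1) = Nh.
  rewrite /Nm /Nh /Nm (elimL_ext (M' := st.1)) // => x j xh.
  apply: (supp_row _ _ (@Nm_supp _ _ A T t g st.1)).
  by apply: contraFN (disjointFl D xh) => xb; rewrite inE xb.
have Eg : Nm A T t g ((1%:M - Nh) *m st.1) = Ng.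
  rewrite /Nm /Ng /Nm (elimL_ext (M' := st.1)) // => x j xg.
  apply: (supp_row _ _ (@Nm_supp _ _ A T t h st.1)).
  by apply: contraFN (disjointFr D xg) => xb; rewrite inE xb.
rewrite Eh Eg.
have NhNg : Nh *m Ng = 0.
  apply: supp_mul0 (@Nm_supp _ _ A T t h st.1) (@Nm_supp _ _ A T t g st.1) _.
  apply: disjointWl (subsetUr Bh Sh) _; rewrite disjoint_sym.
  exact: disjointWl (subsetUl Bg Sg) D.
have NgNh : Ng *m Nh = 0.
  apply: supp_mul0 (@Nm_supp _ _ A T t g st.1) (@Nm_supp _ _ A T t h st.1) _.
  apply: disjointWl (subsetUr Bg Sg) _.
  exact: disjointWr (subsetUl Bh Sh) D.
clearbody Ng Nh.
have PQ : (1%:M - Nh) *m (1%:M - Ng) = (1%:M - Ng) *m (1%:M - Nh).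
  rewrite !mulmxBr !mulmxBl !mul1mx !mulmx1 NhNg NgNh !subr0.
  by rewrite addrAC.
have E2 : forall (X Y S : 'M[C]_n),
    X *m (Y *m S *m ctmx Y) *m ctmx X = (X *m Y) *m S *m ctmx (X *m Y).
  by move=> X Y S; rewrite ctmx_mul !mulmxA.
congr (_, _); first by rewrite !mulmxA PQ.
by rewrite !E2 PQ.
Qed.

Lemma step_sig (C : numClosedFieldType) n (A : 'M[C]_n) T t st g x y :
  x \notin bnd A (clus T g) -> y \notin bnd A (clus T g) ->
  (step A T t st g).2 x y = st.2 x y.
Proof. by move=> xB yB; rewrite step_eq /=; apply: supp_sig (@Nm_supp _ _ A T t g st.1) xB yB. Qed.

Lemma step_priv (C : numClosedFieldType) n (A : 'M[C]_n) T t t' st g :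
  priv A T t g = priv A T t' g -> step A T t st g = step A T t' st g.
Proof. by move=> E; rewrite /step /elimL E. Qed.

Lemma foldl_move (X : eqType) (St : Type) (f : St -> X -> St) a l st :
  (forall y, y \in l -> forall st, f (f st a) y = f (f st y) a) ->
  foldl f (f st a) l = f (foldl f st l) a.
Proof.
elim: l st => [|y l IH] st H //=.
rewrite H ?mem_head // IH // => z zl; apply: H; by rewrite inE zl orbT.
Qed.

Lemma foldl_part (X : eqType) (St : Type) (f : St -> X -> St) (P : pred X) s st :
  (forall x y, x \in s -> y \in s -> P x -> ~~ P y ->
     forall st, f (f st x) y = f (f st y) x) ->
  foldl f st s = foldl f st (filter P s ++ filter (predC P) s).
Proof.
elim: s st => [|a s IH] st H //=.
have H' : forall x y, x \in s -> y \in s -> P x -> ~~ P y ->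
     forall st, f (f st x) y = f (f st y) x.
  by move=> x y xs ys; apply: H; rewrite inE ?xs ?ys orbT.
case Pa: (P a) => /=; first by rewrite IH.
rewrite IH // foldl_cat foldl_move; first by rewrite foldl_cat.
move=> y.
rewrite mem_filter => /andP [Py ys] st'.
symmetry; apply: H => //; by rewrite ?inE ?ys ?eqxx ?orbT ?Pa.
Qed.

Lemma foldl_eq_in (X : eqType) (St : Type) (f f' : St -> X -> St) s st :
  (forall x, x \in s -> forall st, f st x = f' st x) -> foldl f st s = foldl f' st s.
Proof.
elim: s st => [|a s IH] st H //=.
rewrite H ?mem_head // IH // => x xs; apply: H; by rewrite inE xs orbT.
Qed.

Lemma foldl_reorder (X : eqType) (St : Type) (f : St -> X -> St) (rel : X -> X -> bool)
    (D : pred X) :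
  (forall x y, x \in D -> y \in D -> x != y -> ~~ rel x y -> ~~ rel y x ->
     forall st, f (f st x) y = f (f st y) x) ->
  forall s1 s2, {subset s1 <= D} -> uniq s1 -> perm_eq s1 s2 ->
  pairwise (fun x y => ~~ rel x y) s1 -> pairwise (fun x y => ~~ rel x y) s2 ->
  forall st, foldl f st s1 = foldl f st s2.
Proof.
move=> Hc s1; elim/last_ind: s1 => [|s1 x IH] s2 sD U P p1 p2 st.
  by move: P; rewrite perm_sym => /perm_nilP ->.
have xs2 : x \in s2 by rewrite -(perm_mem P) mem_rcons mem_head.
move: P p2; case/splitPr: xs2 => a b P p2.
have U2 : uniq (a ++ x :: b) by rewrite -(perm_uniq P).
have xnb : x \notin b.
  by move: U2; rewrite cat_uniq /= => /and3P [_ _ /andP []].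
have comm : forall y, y \in b -> forall st, f (f st x) y = f (f st y) x.
  move=> y yb st'.
  have ys1 : y \in rcons s1 x by rewrite (perm_mem P) mem_cat inE yb !orbT.
  apply: Hc; first by apply: sD; rewrite mem_rcons mem_head.
  - exact: sD.
  - by apply/eqP => e; rewrite e yb in xnb.
  - move: p2; rewrite pairwise_cat /= => /and3P [_ _ /andP [/allP /(_ y yb) ? _]] //.
  - move: p1; rewrite pairwise_rcons => /andP [/allP A _].
    apply: A; move: ys1; rewrite mem_rcons inE => /orP [/eqP e|//].
    by rewrite -e yb in xnb.
rewrite foldl_rcons foldl_cat /= foldl_move // -foldl_cat.
congr f; apply: IH.
- by move=> z zs; apply: sD; rewrite mem_rcons inE zs orbT.
- by move: U; rewrite rcons_uniq => /andP [].
- rewrite -(perm_cons x); apply: perm_trans (perm_trans _ P) _.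
    by rewrite perm_sym perm_rcons.
  by rewrite -cat1s perm_catCA.
- by move: p1; rewrite pairwise_rcons => /andP [].
- apply: subseq_pairwise p2; apply: cat_subseq (subseq_refl a) _.
  exact: subseq_cons.
Qed.

Lemma foldl_sig (X : eqType) (C : numClosedFieldType) n (f : 'M[C]_n * 'M[C]_n -> X -> 'M[C]_n * 'M[C]_n)
    s st i j :
  (forall x, x \in s -> forall st, (f st x).2 i j = st.2 i j) ->
  (foldl f st s).2 i j = st.2 i j.
Proof.
elim: s st => [|a s IH] st H //=.
rewrite IH ?H ?mem_head // => x xs; apply: H; by rewrite inE xs orbT.
Qed.

Lemma aroot_mem u : aroot u \in alabels u.
Proof. by case: u => [g|g l r] /=; rewrite inE eqxx. Qed.

Lemma alabels_behead u x : x \in alabels u -> x != aroot u -> x \in behead (alabels u).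
Proof. by case: u => [g|g l r] /=; rewrite inE; [move=> -> | case/orP => [->|]]. Qed.

Lemma desc_asub t g u : asub t g = Some u -> descendants t g = behead (alabels u).
Proof. by rewrite /descendants => ->. Qed.

Lemma BS_clus (C : numClosedFieldType) n (A : 'M[C]_n) T t g :
  bnd A (clus T g) :|: priv A T t g \subset clus T g.
Proof. by rewrite subUset bnd_clus priv_clus. Qed.

Lemma comm_disj (C : numClosedFieldType) n (A : 'M[C]_n) T t x y st :
  [disjoint clus T x & clus T y] ->
  step A T t (step A T t st x) y = step A T t (step A T t st y) x.
Proof.
move=> D; apply: step_comm.
apply: disjointWl (BS_clus A T t x) _; exact: disjointWr (BS_clus A T t y) D.
Qed.

Lemma consistent_pairwise t o : consistent t o ->
  pairwise (fun x y => y \notin descendants t x) o.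
Proof.
move=> /and3P [U P /allP H].
apply/(pairwiseP (true, [::])) => a b ai bi ab.
apply/negP => hd.
have ao : nth (true, [::]) o a \in o by apply: mem_nth.
move: (H _ ao) => /allP /(_ _ hd).
by rewrite !index_uniq // ltnNge (ltnW ab).
Qed.

Lemma key (C : numClosedFieldType) n (A Sig : 'M[C]_n) (T : ctree n) t o i u :
  uniq (alabels t) -> awf (clus T) t -> consistent t o -> asub t i = Some u ->
  [/\ subm (bnd A (clus T i)) (bnd A (clus T i)) (Sigma_plus A Sig T t o i) =
      subm (bnd A (clus T i)) (bnd A (clus T i))
        (foldl (step A T u) (A, Sig) [seq x <- take (index i o).+1 o | x \in alabels u]).2,
      perm_eq [seq x <- take (index i o).+1 o | x \in alabels u] (alabels u) &
      pairwise (fun x y => y \notin descendants u x)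
        [seq x <- take (index i o).+1 o | x \in alabels u]].
Proof.
move=> Ut Wt Co Eu.
move: (Co) => /and3P [Uo Po /allP Ho].
have Uu : uniq (alabels u) := asub_uniq Ut Eu.
have Wu : awf (clus T) u := awf_sub Wt Eu.
have Ru : aroot u = i := asub_root Eu.
have it : i \in alabels t := asub_mem Eu.
have io : i \in o by rewrite (perm_mem Po).
set k := index i o.
set Pre := take k.+1 o.
set Q := [seq x <- Pre | x \in alabels u].
have Dti : descendants t i = behead (alabels u) := desc_asub Eu.
have uPre : forall x, x \in alabels u -> x \in Pre.
  move=> x xu.
  have xo : x \in o by rewrite (perm_mem Po); apply: (asub_sub Eu).
  rewrite /Pre in_take //.
  have [/eqP xi|xi] := boolP (x == i); first by rewrite xi.
  have xd : x \in descendants t i by rewrite Dti; apply: alabels_behead; rewrite ?Ru.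
  by move: (Ho _ io) => /allP /(_ _ xd) /ltnW.
have disj : forall y, y \in Pre -> y \notin alabels u -> [disjoint clus T i & clus T y].
  move=> y yP yu.
  have yo : y \in o := mem_take yP.
  have yt : y \in alabels t by rewrite -(perm_mem Po).
  apply: awf_disj Wt Ut it yt _ _ _.
  - by apply/eqP => e; rewrite -e -Ru aroot_mem in yu.
  - by rewrite Dti; apply/negP => /mem_behead; rewrite (negbTE yu).
  - apply/negP => id.
    move: (Ho _ yo) => /allP /(_ _ id).
    move: yP; rewrite /Pre in_take // ltnS => yk.
    by rewrite ltnNge yk.
have sub_i : forall x, x \in alabels u -> clus T x \subset clus T i.
  by move=> x xu; rewrite -Ru; apply: awf_root.
split.
- rewrite /Sigma_plus -/k -/Pre.
  rewrite (foldl_part (P := fun x => x \in alabels u)); last first.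
    move=> x y _ yP xu yu st; apply: comm_disj.
    apply: disjointWl (sub_i _ xu) _; exact: disj.
  rewrite foldl_cat -/Q.
  apply: subm_ext => a b aB bB.
  rewrite foldl_sig; last first.
    move=> y; rewrite mem_filter /= => /andP [yu yP] st.
    have D := disj _ yP yu.
    apply: step_sig.
    + apply: contraFN (disjointFr D (subsetP (bnd_clus A (clus T i)) _ aB)).
      exact: (subsetP (bnd_clus A (clus T y))).
    + apply: contraFN (disjointFr D (subsetP (bnd_clus A (clus T i)) _ bB)).
      exact: (subsetP (bnd_clus A (clus T y))).
  congr ((_ : 'M[C]_n * 'M[C]_n).2 a b).
  apply: foldl_eq_in => x; rewrite mem_filter => /andP [xu _] st.
  apply: step_priv; by rewrite /priv (asub_trans Ut Eu xu).
- apply: uniq_perm => //; first by rewrite filter_uniq // take_uniq.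
  move=> x; rewrite mem_filter; case xu: (x \in alabels u) => //=.
  exact: uPre.
- have H : pairwise (fun x y => y \notin descendants t x) Q.
    apply: subseq_pairwise (consistent_pairwise Co).
    apply: subseq_trans (filter_subseq _ _) (take_subseq _ _).
  rewrite -(@eq_in_pairwise _ (fun x => x \in alabels u)
     (fun x y => y \notin descendants t x) (fun x y => y \notin descendants u x)) //.
    move=> x y xu yu /=; by rewrite (desc_trans Ut Eu xu).
  by apply/allP => x; rewrite mem_filter => /andP [].
Qed.

Unset Implicit Arguments.

Theorem corollary4 (C : numClosedFieldType) (n : nat) (A Sig : 'M[C]_n)
    (T : ctree n) (pr ps : seq bool) (ordr ords : seq lab) :
  A \in unitmx -> struct_sym A -> sigma_pattern A Sig ->
  cluster_tree T -> is_leaf_pos T pr -> is_leaf_pos T ps ->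
  consistent (aug T pr) ordr -> consistent (aug T ps) ords ->
  elim_ok A Sig T (aug T pr) ordr -> elim_ok A Sig T (aug T ps) ords ->
  forall i : lab, i \in alabels (aug T pr) -> i \in alabels (aug T ps) ->
    subm (bnd A (clus T i)) (bnd A (clus T i)) (Sigma_plus A Sig T (aug T pr) ordr i)
    = subm (bnd A (clus T i)) (bnd A (clus T i)) (Sigma_plus A Sig T (aug T ps) ords i).
Proof.
move=> _ _ _ clT lr ls cr cs _ _ i ir iss.
have Ur : uniq (alabels (aug T pr)).
  by move: cr => /and3P [U P _]; rewrite -(perm_uniq P).
have Us : uniq (alabels (aug T ps)).
  by move: cs => /and3P [U P _]; rewrite -(perm_uniq P).
have Wr := awf_aug clT lr.
have Ws := awf_aug clT ls.
have [u Er] := asub_Some ir.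
have [u' Es] := asub_Some iss.
have eu : u' = u by rewrite (asub_aug Es) (asub_aug Er).
subst u'.
have [K1 K2 K3] := @key _ _ A Sig T _ _ i u Ur Wr cr Er.
have [L1 L2 L3] := @key _ _ A Sig T _ _ i u Us Ws cs Es.
rewrite K1 L1; congr (subm _ _ _); congr (_.2).
apply: (@foldl_reorder _ _ _ (fun x y => y \in descendants u x) (fun x => x \in alabels u)).
- move=> x y xu yu xy r1 r2 st; apply: comm_disj.
  exact: awf_disj (awf_sub Wr Er) (asub_uniq Ur Er) xu yu xy r1 r2.
- by move=> x; rewrite mem_filter => /andP [].
- by move: cr => /and3P [U _ _]; rewrite filter_uniq // take_uniq.
- by apply: perm_trans K2 _; rewrite perm_sym.
- exact: K3.
- exact: L3.
Qed.
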